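(* Let $k\ge 2$ be even and $n>k/2$. Any encoding that, given access to encodings of both rows of a $2\times n$ array $A$ answering unsorted (or sorted) 1-sided Top-$k$ queries on each row, answers all unsorted 3-sided Top-$k$ queries on $A$ must use at least $\lceil (n-k/2)\lg(1+\sqrt2)\rceil-o(n)\approx 1.27(n-k/2)-o(n)$ additional bits (in the worst case over arrays $A$). Equivalently, there is a family of $2\times n$ arrays with distinct entries, all of whose rows give identical answers to every 1-sided Top-$k$ query on that row, containing at least $2^{(n-k/2)\lg(1+\sqrt2)-o(n)}$ arrays with pairwise distinct answer sets to the unsorted 3-sided Top-$k$ queries.
   Context: All arrays have pairwise distinct entries from a totally ordered set. For a 1D array $B[1..n]$, the 1-sided query Top-$k(1,i,B)$ returns the positions of the $k$ largest values of $B[1..i]$ (all positions if $i\le k$); sorted queries report these positions in decreasing order of value, unsorted queries in arbitrary order. For a $2\times n$ array $A$, a 3-sided Top-$k$ query Top-$k(r,s,1,b,A)$ with $1\le r\le s\le 2$, $1\le b\le n$ returns the positions of the $k$ largest values in $A[r..s][1..b]$ (rows $r..s$, columns $1..b$). ''Additional bits'' means the length of the bit string that, together with the given row encodings, determines all answers. *)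

(* Defs.v *)
From Stdlib Require Import Reals.
From mathcomp Require Import all_boot.
Set Implicit Arguments. Unset Strict Implicit. Unset Printing Implicit Defensive.

(* With distinct values this is exactly the set of positions of the k largest
   values in S (all of S if #|S| <= k). *)
Definition topk (P : finType) (k : nat) (v : P -> nat) (S : {set P}) : {set P} :=
  [set p in S | #|[set q in S | v p < v q]| < k].

Definition topk_sorted (P : finType) (k : nat) (v : P -> nat) (S : {set P})
  : seq P := sort (fun p q => v q <= v p) (enum (topk k v S)).

(* 2 x n arrays with entries in nat (a totally ordered set); rows indexed by
   'I_2 (row 1 = 0, row 2 = 1), columns by 'I_n (column j+1 = j). *)
Definition array2 (n : nat) := 'I_2 -> 'I_n -> nat.

Definition distinct_entries n (A : array2 n) : Prop :=
  injective (fun p : 'I_2 * 'I_n => A p.1 p.2).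

Definition prefix n (i : nat) : {set 'I_n} := [set j : 'I_n | j < i].

Definition onesided_sorted n (k : nat) (B : 'I_n -> nat) (i : nat) : seq 'I_n :=
  topk_sorted k B (prefix n i).

Definition onesided n (k : nat) (B : 'I_n -> nat) (i : nat) : {set 'I_n} :=
  topk k B (prefix n i).

Definition same_rows n (k : nat) (B C : 'I_n -> nat) : Prop :=
  forall i, 1 <= i <= n ->
    onesided_sorted k B i = onesided_sorted k C i /\ onesided k B i = onesided k C i.

Definition region n (r s : 'I_2) (b : nat) : {set 'I_2 * 'I_n} :=
  [set p : 'I_2 * 'I_n | (r <= p.1 <= s) && (p.2 < b)].

(* All answers of unsorted 3-sided Top-k queries Top-k(r,s,1,b,A),
   1 <= r <= s <= 2, 1 <= b <= n; invalid indices are mapped to set0. *)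
Definition answers3 n (k : nat) (A : array2 n)
  : {ffun 'I_2 * 'I_2 * 'I_n.+1 -> {set 'I_2 * 'I_n}} :=
  [ffun q : 'I_2 * 'I_2 * 'I_n.+1 => let: (r, s, b) := q in
     if (r <= s) && (1 <= b) then topk k (fun p => A p.1 p.2) (region n r s b)
     else set0].

Definition lg (x : R) : R := Rdiv (ln x) (ln 2).

Definition big_enough (cnt n k : nat) (eps : R) : Prop :=
  Rle (Rpower 2 (Rminus (Rmult (Rminus (INR n) (Rdiv (INR k) 2)) (lg (Rplus 1 (sqrt 2)))) (Rmult eps (INR n)))) (INR cnt).

(* Main.v *)
Require Import Defs.
From Stdlib Require Import Reals.
From mathcomp Require Import all_boot zify.
From Stdlib Require Import Lra FunctionalExtensionality.

Lemma card_pairs n (P : nat -> nat -> bool) :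
  #|[set q : 'I_2 * 'I_n | P q.1 q.2]| = count (P 0) (iota 0 n) + count (P 1) (iota 0 n).
Proof.
have -> : #|[set q : 'I_2 * 'I_n | P q.1 q.2]| = \sum_(q : 'I_2 * 'I_n | P q.1 q.2) 1.
  by rewrite -sum1_card; apply: eq_bigl => q; rewrite inE.
rewrite big_mkcond /=.
rewrite -(pair_big xpredT xpredT (fun (r : 'I_2) (j : 'I_n) => if P r j then 1 else 0)) /=.
rewrite big_ord_recl big_ord1 /=.
have E : forall r, \sum_(j < n) (if P r j then 1 else 0) = count (P r) (iota 0 n).
  move=> r; rewrite -big_mkcond /= -(big_mkord (P r) (fun _ => 1)) sum1_count.
  by rewrite /index_iota subn0.
by rewrite (E 0) (E 1).
Qed.

Lemma count_int lo hi n :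
  count (fun j => (lo <= j) && (j < hi)) (iota 0 n) = minn hi n - lo.
Proof.
elim: n => [|n IH]; first by rewrite /= minn0.
rewrite -addn1 iotaD count_cat IH /= addn0 add0n.
case: (leqP hi n) => Hh; case: (leqP lo n) => Hl; rewrite /= ?andbF ?andbT ?addn0; lia.
Qed.

Lemma inc_mono (f : nat -> nat) : (forall i, f i < f i.+1) ->
  forall x y, (f x < f y) = (x < y).
Proof.
move=> Hf x y.
have H : {homo f : i j / i < j} by apply: homo_ltn => //; exact: ltn_trans.
case: (ltngtP x y) => [Hxy|Hyx|->]; first by rewrite H.
  by apply/negbTE; rewrite -leqNgt ltnW // H.
by rewrite ltnn.
Qed.

Definition mkA n (a bb : nat -> nat) : array2 n :=
  fun r j => if nat_of_ord r == 0 then a j else bb j.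
Arguments mkA {n}.

Definition R3 n b := region n ord0 (@ord_max 1) b.

Lemma in_R3 n b (q : 'I_2 * 'I_n) : (q \in R3 n b) = (q.2 < b).
Proof.
rewrite /R3 /region inE /=.
by case: q => [[r Hr] j] /=; have -> : r <= 1 by lia.
Qed.

Lemma above_card n b (a bb : nat -> nat) x :
  #|[set q in R3 n b | x < mkA a bb q.1 q.2]| =
  count (fun j => (j < b) && (x < a j)) (iota 0 n) +
  count (fun j => (j < b) && (x < bb j)) (iota 0 n).
Proof.
rewrite -(card_pairs n (fun r j => (j < b) && (x < (if r == 0 then a j else bb j)))).
apply: eq_card => q; rewrite !inE.
by case: q => [[[|[|r]] Hr] j]; rewrite /mkA /=.
Qed.

Lemma in_top n k b (a bb : nat -> nat) (Ha : forall i, a i < a i.+1)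
  (u v : nat) (Hu : u < n) :
  b <= n -> u < b -> v <= b -> (forall j, j < v -> bb j < a u) ->
  (b - u.+1) + (b - v) < k ->
  ((ord0 : 'I_2), Ordinal Hu) \in topk k (fun p => mkA a bb p.1 p.2) (R3 n b).
Proof.
move=> Hbn Hub Hvb Hbv Hk.
rewrite /topk inE in_R3 /= Hub /=.
rewrite above_card /mkA /=.
have -> : count (fun j => (j < b) && (a u < a j)) (iota 0 n) = b - u.+1.
  have -> : b - u.+1 = minn b n - u.+1 by congr (_ - _); lia.
  rewrite -count_int; apply: eq_count => j; rewrite (inc_mono _ Ha); lia.
apply: leq_ltn_trans Hk; rewrite leq_add2l.
have -> : b - v = minn b n - v by congr (_ - _); lia.
rewrite -count_int; apply: sub_count => j /andP [Hj Hx].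
rewrite Hj andbT; rewrite leqNgt; apply/negP => Hjv.
by have := Hbv j Hjv; rewrite ltnNge ltnW.
Qed.

Lemma out_top n k b (a bb : nat -> nat) (Ha : forall i, a i < a i.+1)
  (u v : nat) (Hu : u < n) :
  b <= n -> u < b -> v <= b -> (forall j, v <= j -> j < b -> a u < bb j) ->
  k <= (b - u.+1) + (b - v) ->
  ((ord0 : 'I_2), Ordinal Hu) \notin topk k (fun p => mkA a bb p.1 p.2) (R3 n b).
Proof.
move=> Hbn Hub Hvb Hbv Hk.
rewrite /topk inE in_R3 /= Hub /= -leqNgt.
rewrite above_card /mkA /=.
have -> : count (fun j => (j < b) && (a u < a j)) (iota 0 n) = b - u.+1.
  have -> : b - u.+1 = minn b n - u.+1 by congr (_ - _); lia.
  rewrite -count_int; apply: eq_count => j; rewrite (inc_mono _ Ha); lia.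
apply: (leq_trans Hk); rewrite leq_add2l.
have -> : b - v = minn b n - v by congr (_ - _); lia.
rewrite -count_int; apply: sub_count => j /andP [Hj Hx].
by rewrite Hx Hbv.
Qed.

Definition ah (c : nat -> nat) (i : nat) : nat :=
  if c i.+1 == 2 then 2*i+4 else if c i == 0 then 2*i + c i.-1 else 2*i + 1 + c i.
Definition bh (c : nat -> nat) (j : nat) : nat :=
  if c j.+1 == 0 then 2*j+4 else if c j == 2 then 2*j + 2 - c j.-1 else 2*j + 3 - c j.
Definition av c i := 2 * ah c i.
Definition bv c j := (2 * bh c j).+1.

Definition walk (c : nat -> nat) :=
  c 0 = 1 /\ (forall j, c j <= 2) /\ (forall j, (c j <= (c j.+1).+1) && (c j.+1 <= (c j).+1)).

Lemma walk_cl' c : walk c -> forall j, (c j.-1 <= (c j).+1) && (c j <= (c j.-1).+1).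
Proof. move=> [_ [_ H]] [|j] //=; lia. Qed.

Ltac gen6 c p :=
  generalize (c p.-1) (c p) (c p.+1) (c p.+2) (c p.+3) (c p.+4);
  let x0 := fresh in let x1 := fresh in let x2 := fresh in
  let x3 := fresh in let x4 := fresh in let x5 := fresh in
  intros x0 x1 x2 x3 x4 x5;
  case: x0 => [|[|[|x0]]] //=; case: x1 => [|[|[|x1]]] //=; case: x2 => [|[|[|x2]]] //=;
  case: x3 => [|[|[|x3]]] //=; case: x4 => [|[|[|x4]]] //=; case: x5 => [|[|[|x5]]] //=;
  lia.

Ltac facts W c p :=
  let B := fresh in let C := fresh in let C' := fresh in
  move: (W) => [_ [B C]]; have C' := walk_cl' c W;
  move: (B p.-1) (B p) (B p.+1) (B p.+2) (B p.+3) (B p.+4) (C' p) (C p) (C p.+1) (C p.+2) (C p.+3);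
  clear B C C'.

Lemma av_inc c (W : walk c) i : av c i < av c i.+1.
Proof. rewrite /av /ah /=. facts W c i. gen6 c i. Qed.

Lemma bv_inc c (W : walk c) i : bv c i < bv c i.+1.
Proof. rewrite /bv /bh /=. facts W c i. gen6 c i. Qed.

Lemma C1_0 c (W : walk c) p : c p.+2 = 0 -> bv c p < av c p.+3.
Proof. rewrite /av /bv /ah /bh /= => E. move: E; facts W c p. gen6 c p. Qed.
Lemma C1_1 c (W : walk c) p : c p.+1 = 1 -> bv c p < av c p.+1.
Proof. rewrite /av /bv /ah /bh /= => E. move: E; facts W c p. gen6 c p. Qed.
Lemma C1_2 c (W : walk c) p : c p.+1 = 2 -> bv c p.+1 < av c p.
Proof. rewrite /av /bv /ah /bh /= => E. move: E; facts W c p. gen6 c p. Qed.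
Lemma C2_0 c (W : walk c) p : c p.+1 = 0 -> av c p.+1 < bv c p.
Proof. rewrite /av /bv /ah /bh /= => E. move: E; facts W c p. gen6 c p. Qed.
Lemma C2_1 c (W : walk c) p : c p.+1 = 1 -> av c p < bv c p.+1.
Proof. rewrite /av /bv /ah /bh /= => E. move: E; facts W c p. gen6 c p. Qed.
Lemma C2_2 c (W : walk c) p : c p.+2 = 2 -> av c p < bv c p.+3.
Proof. rewrite /av /bv /ah /bh /= => E. move: E; facts W c p. gen6 c p. Qed.

Lemma sep c c' (W : walk c) (W' : walk c') k n m :
  0 < k./2 -> k = (k./2).*2 -> m + k./2 <= n -> c m < c' m ->
  answers3 k (@mkA n (av c) (bv c)) <> answers3 k (@mkA n (av c') (bv c')).
Proof.
set K := k./2 => HK Hk Hn Hlt.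
have Hk2 : k = K + K by rewrite Hk -addnn.
clearbody K.
move: (W) (W') => [H0 [B _]] [H0' [B' _]].
have Bm := B m; have Bm' := B' m.
have key : av c (m - c m) < bv c (m + c m - 1).
  case: m Hn Hlt Bm Bm' => [|p] Hn Hlt Bm Bm'; first by rewrite H0 H0' in Hlt.
  have : c p.+1 = 0 \/ c p.+1 = 1 by lia.
  case=> Ec; rewrite Ec.
    have e1 : p.+1 - 0 = p.+1 by lia. have e2 : p.+1 + 0 - 1 = p by lia.
    by rewrite e1 e2; exact: C2_0.
  have e1 : p.+1 - 1 = p by lia. have e2 : p.+1 + 1 - 1 = p.+1 by lia.
  by rewrite e1 e2; exact: C2_1.
have key' : 0 < m + c' m - 1 -> bv c' (m + c' m - 2) < av c' (m.+1 - c' m).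
  case: m Hn Hlt Bm Bm' {key} => [|p] Hn Hlt Bm Bm' Hv.
    by move: Hv; rewrite H0'.
  have : c' p.+1 = 1 \/ c' p.+1 = 2 by lia.
  case=> Ec; rewrite Ec.
    have e1 : p.+1 + 1 - 2 = p by lia. have e2 : p.+2 - 1 = p.+1 by lia.
    by rewrite e1 e2; exact: C1_1.
  have e1 : p.+1 + 2 - 2 = p.+1 by lia. have e2 : p.+2 - 2 = p by lia.
  by rewrite e1 e2; exact: C1_2.
move=> Heq.
have Hb1 : m + K < n.+1 by lia.
have := congr1 (fun f : {ffun _ -> _} => f (((ord0 : 'I_2), (@ord_max 1)), Ordinal Hb1)) Heq.
rewrite !ffunE /=.
have -> : (0 < m + K) = true by lia.
rewrite /= -/(R3 n (m + K)) => E.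
have Hu : m.+1 - c' m < n by lia.
have Hin : ((ord0 : 'I_2), Ordinal Hu) \in
    topk k (fun p => mkA (av c') (bv c') p.1 p.2) (R3 n (m + K)).
  apply: (@in_top n k (m+K) _ _ (av_inc c' W') (m.+1 - c' m) (m + c' m - 1) Hu).
  - lia.
  - lia.
  - lia.
  - move=> j Hj.
    have M := inc_mono _ (bv_inc c' W').
    apply: leq_ltn_trans (key' _); last by lia.
    rewrite leqNgt M; lia.
  - lia.
have Hout : ((ord0 : 'I_2), Ordinal Hu) \notin
    topk k (fun p => mkA (av c) (bv c) p.1 p.2) (R3 n (m + K)).
  apply: (@out_top n k (m+K) _ _ (av_inc c W) (m.+1 - c' m) (m + c m - 1) Hu).
  - lia.
  - lia.
  - lia.
  - move=> j Hj Hjb.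
    have M := inc_mono _ (bv_inc c W).
    have Ma := inc_mono _ (av_inc c W).
    have Y : av c (m.+1 - c' m) <= av c (m - c m) by rewrite leqNgt Ma; lia.
    apply: leq_ltn_trans Y _; apply: (leq_trans key); rewrite leqNgt M; lia.
  - have : m = 0 -> c m = 1 by move->.
    have : m = 0 -> c' m = 1 by move->.
    lia.
by rewrite E Hin in Hout.
Qed.

Lemma big_enough_of (cnt n k M K : nat) (eps : R) :
  Rlt 0 eps -> k = (K + K)%N -> n = (M + K)%N ->
  Rle (pow (Rplus 1 (sqrt 2)) M) (INR cnt) -> big_enough cnt n k eps.
Proof.
move=> He Hk Hn Hc; rewrite /big_enough /lg /Rpower.
have Hl2 : Rlt 0 (ln 2) by rewrite -ln_1; apply: ln_increasing; lra.
have Hc0 : Rlt 0 (Rplus 1 (sqrt 2)) by have := Rlt_sqrt2_0; lra.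
have HK : Rminus (INR n) (Rdiv (INR k) 2) = INR M.
  rewrite Hn Hk !plus_INR; field.
rewrite HK.
apply: Rle_trans Hc.
rewrite -Rpower_pow //.
rewrite /Rpower.
have E : Rmult (Rminus (Rmult (INR M) (Rdiv (ln (Rplus 1 (sqrt 2))) (ln 2))) (Rmult eps (INR n))) (ln 2)
   = Rminus (Rmult (INR M) (ln (Rplus 1 (sqrt 2)))) (Rmult (Rmult eps (INR n)) (ln 2)).
  field; lra.
rewrite E.
have Hn0 : Rle 0 (INR n) by apply: pos_INR.
have : Rle 0 (Rmult (Rmult eps (INR n)) (ln 2)).
  apply: Rmult_le_pos; [apply: Rmult_le_pos; lra | lra].
move=> H.
case: (Rle_lt_or_eq_dec _ _ H) => H'.
  apply: Rlt_le; apply: exp_increasing; lra.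
rewrite -H'; right; congr exp; ring.
Qed.

Definition close (x y : nat) := (x <= y.+1) && (y <= x.+1).
Fixpoint valid (s : seq nat) : bool :=
  if s is x :: s' then [&& x <= 2, close x (head 1 s') & valid s'] else true.

Fixpoint walks (m : nat) : seq (seq nat) * seq (seq nat) * seq (seq nat) :=
  match m with
  | 0 => ([::], [:: [::]], [::])
  | m'.+1 => let: (z, o, w) := walks m' in
     (map (cons 0) (z ++ o), map (cons 1) (z ++ o ++ w), map (cons 2) (o ++ w))
  end.

Definition allw m := let: (z, o, w) := walks m in z ++ o ++ w.

Definition good m (H : pred nat) (l : seq (seq nat)) :=
  uniq l /\ forall s, s \in l -> [&& valid s, H (head 1 s) & size s == m].

Lemma cons_inj (x : nat) : injective (cons x).
Proof. by move=> s t [->]. Qed.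

Lemma good_cat m H1 H2 l1 l2 : good m H1 l1 -> good m H2 l2 ->
  (forall y, H1 y -> H2 y -> False) -> good m (predU H1 H2) (l1 ++ l2).
Proof.
move=> [U1 P1] [U2 P2] D; split.
  rewrite cat_uniq U1 U2 /= andbT; apply/hasPn => s /P2 /and3P [_ G2 _].
  apply/negP => /P1 /and3P [_ G1 _]; exact: (D _ G1 G2).
move=> s; rewrite mem_cat => /orP [/P1|/P2] /and3P [V H S]; by rewrite V S /= H ?orbT.
Qed.

Arguments good_cat {m H1 H2 l1 l2}.

Lemma good_step m H x l : good m H l -> (forall y, H y -> close x y) -> x <= 2 ->
  good m.+1 (pred1 x) (map (cons x) l).
Proof.
move=> [U1 P1] C1 Hx; split.
  by rewrite map_inj_uniq //; exact: cons_inj.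
move=> s /mapP [t] /P1 /and3P [V G /eqP S] ->.
by rewrite /= Hx V S !eqxx C1.
Qed.

Arguments good_step {m H x l}.

Lemma walks_good m : let: (z, o, w) := walks m in
  [/\ good m (pred1 0) z, good m (pred1 1) o & good m (pred1 2) w].
Proof.
elim: m => [|m IH] /=.
  split; split => // s; rewrite ?in_nil ?inE // => /eqP -> //.
case: (walks m) IH => [[z o] w] [Gz Go Gw].
have Gzo := good_cat Gz Go ltac:(by move=> y /eqP ->).
have Gow := good_cat Go Gw ltac:(by move=> y /eqP ->).
have Gzow := good_cat Gz Gow ltac:(by move=> y /eqP -> /orP [] /eqP).
split.
- by apply: (good_step Gzo) => // y /orP [] /eqP ->.
- by apply: (good_step Gzow) => // y /orP [/eqP ->|/orP [] /eqP ->].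
- by apply: (good_step Gow) => // y /orP [] /eqP ->.
Qed.

Lemma allw_good m : good m xpredT (allw m).
Proof.
rewrite /allw; move: (walks_good m); case: (walks m) => [[z o] w] [Gz Go Gw].
have Gow := good_cat Go Gw ltac:(by move=> y /eqP ->).
have [U P] := good_cat Gz Gow ltac:(by move=> y /eqP -> /orP [] /eqP).
split => // s /P /and3P [-> _ ->] //.
Qed.

Lemma walks_size m : let: (z, o, w) := walks m in
  Rle (pow (Rplus 1 (sqrt 2)) m)
      (Rplus (INR (size o)) (Rmult (Rplus (INR (size z)) (INR (size w))) (Rdiv (sqrt 2) 2))).
Proof.
have S2 : Rmult (sqrt 2) (sqrt 2) = (2:R) by apply: sqrt_sqrt; lra.
have S0 := Rlt_sqrt2_0.
elim: m => [|m IH] /=.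
  rewrite /=; lra.
case: (walks m) IH => [[z o] w] IH.
rewrite !size_map !size_cat !plus_INR.
set Z := INR (size z) in IH *; set O := INR (size o) in IH *; set Wz := INR (size w) in IH *.
have HZ : Rle 0 Z by apply: pos_INR.
have HO : Rle 0 O by apply: pos_INR.
have HW : Rle 0 Wz by apply: pos_INR.
have E : Rplus (Rplus Z (Rplus O Wz)) (Rmult (Rplus (Rplus Z O) (Rplus O Wz)) (Rdiv (sqrt 2) 2))
  = Rmult (Rplus 1 (sqrt 2)) (Rplus O (Rmult (Rplus Z Wz) (Rdiv (sqrt 2) 2))).
  field_simplify; nra.
rewrite E; apply: Rmult_le_compat_l => //; lra.
Qed.

Lemma allw_size m : Rle (pow (Rplus 1 (sqrt 2)) m) (INR (size (allw m))).
Proof.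
have S2 : Rmult (sqrt 2) (sqrt 2) = (2:R) by apply: sqrt_sqrt; lra.
have S0 := Rlt_sqrt2_0.
have H := walks_size m; rewrite /allw; move: H.
case: (walks m) => [[z o] w] H.
rewrite !size_cat !plus_INR.
have HZ : Rle 0 (INR (size z)) by apply: pos_INR.
have HW : Rle 0 (INR (size w)) by apply: pos_INR.
have : Rle (Rdiv (sqrt 2) 2) 1 by nra.
nra.
Qed.

Set Implicit Arguments.
Unset Strict Implicit.

Lemma valid_nth s : valid s -> forall i, nth 1 s i <= 2 /\ close (nth 1 s i) (nth 1 s i.+1).
Proof.
elim: s => [|x s IH] /= H i; first by rewrite !nth_nil.
case/and3P: H => Hx Hc Hv; case: i => [|i] /=.
  by split => //; rewrite -nth0.
exact: IH.
Qed.

Definition cw M (s : seq nat) j := nth 1 s (M - j).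

Lemma walk_cw M s : valid s -> size s = M -> walk (cw M s).
Proof.
move=> V S; rewrite /walk /cw; split; [|split].
- by rewrite subn0 nth_default // S.
- by move=> j; case: (valid_nth V (M - j)).
- move=> j; case: (ltnP j M) => Hj.
    have -> : M - j = (M - j.+1).+1 by lia.
    case: (valid_nth V (M - j.+1)) => _ /andP [A B]; by rewrite A B.
  have -> : M - j = 0 by lia.
  have -> : M - j.+1 = 0 by lia.
  by rewrite !leqnSn.
Qed.

Lemma same_rows_inc n k (f g : 'I_n -> nat) :
  (forall i j : 'I_n, (f i < f j) = (i < j)) -> (forall i j : 'I_n, (g i < g j) = (i < j)) ->
  same_rows k f g.
Proof.
move=> Hf Hg.
have T : forall S, topk k f S = topk k g S.
  move=> S; apply/setP => p; rewrite !inE.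
  have -> : [set q in S | f p < f q] = [set q in S | g p < g q].
    by apply/setP => q; rewrite !inE Hf Hg.
  by [].
move=> i _; split; last by rewrite /onesided T.
rewrite /onesided_sorted /topk_sorted T.
have -> : (fun p q : 'I_n => f q <= f p) = (fun p q => g q <= g p) => //.
apply: functional_extensionality => p; apply: functional_extensionality => q.
by rewrite (leqNgt (f q)) (leqNgt (g q)) Hf Hg.
Qed.

Definition build n M s : array2 n := mkA (av (cw M s)) (bv (cw M s)).
Arguments build : clear implicits.

Lemma In_mem (s : seq nat) (l : seq (seq nat)) : List.In s l -> s \in l.
Proof.
elim: l => [|y l IH] //= [->|H]; rewrite inE ?eqxx // IH ?orbT //.
Qed.

Lemma build_rows n M s (r : 'I_2) : valid s -> size s = M ->
  forall i j : 'I_n, (build n M s r i < build n M s r j) = (i < j).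
Proof.
move=> V S i j; have W := walk_cw V S; rewrite /build /mkA.
case: (nat_of_ord r == 0).
  exact: (inc_mono _ (av_inc _ W)).
exact: (inc_mono _ (bv_inc _ W)).
Qed.

Lemma build_distinct n M s : valid s -> size s = M -> distinct_entries (build n M s).
Proof.
move=> V S; have W := walk_cw V S.
move=> [r i] [r' j] /=; rewrite /build /mkA.
have Ma := inc_mono _ (av_inc _ W); have Mb := inc_mono _ (bv_inc _ W).
have Ij : forall f : nat -> nat, (forall x y, (f x < f y) = (x < y)) ->
    f i = f j -> i = j.
  move=> f Mf E; apply: ord_inj; case: (ltngtP (nat_of_ord i) j) => // H;
    [have := Mf i j | have := Mf j i]; by rewrite E ltnn H.
case: r => [[|[|?]] Hr] //=; case: r' => [[|[|?]] Hr'] //= E.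
- by rewrite (Ij _ Ma E); congr (_, _); apply: ord_inj.
- by move: E; rewrite /av /bv; lia.
- by move: E; rewrite /av /bv; lia.
- by rewrite (Ij _ Mb E); congr (_, _); apply: ord_inj.
Qed.

Theorem theorem10 :
  forall k : nat, 2 <= k -> ~~ odd k ->
  forall eps : R, Rlt 0 eps ->
  exists N : nat, forall n : nat, N <= n -> k./2 < n ->
    exists F : seq (array2 n),
      (forall A, List.In A F -> distinct_entries A) /\
      (forall A B, List.In A F -> List.In B F ->
         forall r : 'I_2, same_rows k (A r) (B r)) /\
      uniq (map (answers3 k) F) /\
      big_enough (size F) n k eps.
Proof.
move=> k Hk2 Hodd eps Heps; exists 0 => n _ Hn.
have Hk : k = (k./2).*2.
  by move: (odd_double_half k); rewrite (negbTE Hodd) add0n.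
have HK : 0 < k./2 by lia.
set M := n - k./2.
have [U P] := allw_good M.
have PP : forall s, List.In s (allw M) -> valid s /\ size s = M.
  by move=> s /In_mem /P /and3P [V _ /eqP S].
exists (map (build n M) (allw M)); split; [|split; [|split]].
- move=> A /List.in_map_iff [s [<- Hs]]; case: (PP s Hs) => V S.
  exact: build_distinct.
- move=> A B /List.in_map_iff [s [<- Hs]] /List.in_map_iff [s' [<- Hs']] r.
  case: (PP s Hs) => V S; case: (PP s' Hs') => V' S'.
  by apply: same_rows_inc; apply: build_rows.
- rewrite -map_comp map_inj_in_uniq // => s s' Hs Hs' E.
  move: (P s Hs) (P s' Hs') => /and3P [V _ /eqP S] /and3P [V' _ /eqP S'].
  have W := walk_cw V S; have W' := walk_cw V' S'.
  apply: (eq_from_nth (x0 := 1)); first by rewrite S S'.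
  move=> i Hi; rewrite S in Hi.
  have Ec : forall t, size t = M -> cw M t (M - i) = nth 1 t i.
    by move=> t _; rewrite /cw; congr nth; lia.
  have Hm : M - i + k./2 <= n by lia.
  case: (ltngtP (nth 1 s i) (nth 1 s' i)) => // Hlt; exfalso.
    apply: (@sep _ _ W W' k n (M - i) HK Hk Hm); first by rewrite !Ec.
    exact: E.
  apply: (@sep _ _ W' W k n (M - i) HK Hk Hm); first by rewrite !Ec.
  exact: (esym E).
- rewrite size_map; apply: (@big_enough_of _ n k M (k./2)) => //.
  + by rewrite {1}Hk -addnn.
  + rewrite /M; lia.
  + exact: allw_size.
Qed.
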